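(* Let $a,b$ be unitary matrices of the same size. If $b^{-1}a^2b=a^3$, then $ab^{-1}ab=b^{-1}aba$. *)

(* Defs.v *)
From mathcomp Require Import all_boot all_order all_algebra.
From mathcomp Require Export spectral.

(* Main.v *)
Require Import Defs.
From mathcomp Require Import all_boot all_order all_algebra spectral all_fingroup.
Import GRing.Theory Num.Theory.
Local Open Scope ring_scope.

Lemma char_poly_conj (F : comUnitRingType) n (V A : 'M[F]_n) :
  V \in unitmx -> char_poly (invmx V *m A *m V) = char_poly A.
Proof.
move=> Vu; rewrite /char_poly /char_poly_mx.
have -> : 'X%:M - map_mx (@polyC F) (invmx V *m A *m V) =
   map_mx (@polyC F) (invmx V) *m ('X%:M - map_mx (@polyC F) A) *m map_mx (@polyC F) V.
  rewrite mulmxBr mulmxBl -!map_mxM; congr (_ - _).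
  by rewrite scalar_mxC -mulmxA -map_mxM mulVmx // map_mx1 mulmx1.
rewrite !det_mulmx -mulrA mulrC -mulrA -det_mulmx -map_mxM mulmxV //.
by rewrite map_mx1 det1 mulr1.
Qed.

Lemma conj_expr (F : comUnitRingType) n (V X : 'M[F]_n.+1) k :
  V \in unitmx -> (invmx V *m X *m V) ^+ k = invmx V *m X ^+ k *m V.
Proof.
move=> Vu; elim: k => [|k IH]; first by rewrite !expr0 mulmx1 mulVmx.
by rewrite exprS IH exprS -!mulmxE !mulmxA mulmxK.
Qed.

Lemma diag_expr (F : comUnitRingType) n (d : 'rV[F]_n.+1) k :
  diag_mx d ^+ k = diag_mx (\row_i (d 0 i) ^+ k).
Proof.
elim: k => [|k IH].
  apply/matrixP => i j; rewrite expr0 !mxE; case: eqVneq => _; by rewrite ?expr0.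
rewrite exprS IH -mulmxE mul_diag_mx; apply/matrixP => i j; rewrite !mxE.
by case: eqVneq => _; rewrite ?mulr0n ?mulr0 ?mulr1n ?exprS.
Qed.
Theorem corollary2p2 (C : numClosedFieldType) (n : nat) (a b : 'M[C]_n) :
  a \is unitarymx -> b \is unitarymx ->
  invmx b *m (a *m a) *m b = a *m a *m a ->
  a *m invmx b *m a *m b = invmx b *m a *m b *m a.
Proof.
case: n a b => [|n] a b Ha Hb H; first by rewrite !flatmx0.
have au := unitarymx_unit Ha; have bu := unitarymx_unit Hb.
have an : a \is normalmx.
  apply/normalmxP; have /unitarymxP h := Ha; rewrite h; apply/esym/mulmx1C/h.
move/orthomx_spectralP: an.
set P := spectralmx a; set d := spectral_diag a => aE.
have Pu : P \in unitmx := spectral_unit a.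
have powE k : a ^+ k = invmx P *m diag_mx (\row_i (d 0 i) ^+ k) *m P.
  by rewrite {1}aE conj_expr // diag_expr.
have cp k : char_poly (a ^+ k) = \prod_(i < n.+1) ('X - ((d 0 i) ^+ k)%:P).
  rewrite powE char_poly_conj // char_poly_trig ?diag_mx_is_trig //.
  by apply: eq_bigr => i _; rewrite !mxE eqxx mulr1n.
have h3 : a ^+ 3 = invmx b *m a ^+ 2 *m b.
  by rewrite expr2 -mulmxE H !exprS expr0 mulr1 -!mulmxE mulmxA.
have cpe : char_poly (a ^+ 2) = char_poly (a ^+ 3) by rewrite h3 char_poly_conj.
pose s := [seq (d 0 i) ^+ 2 | i <- enum 'I_n.+1].
pose t := [tuple (d 0 i) ^+ 3 | i < n.+1].
have pst : perm_eq s t.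
  apply: prod_XsubC_eq; rewrite /s /t /= big_map.
  rewrite big_map; move: cpe; rewrite !cp -!big_enum /=; exact.
have [sg hsg] := tuple_permP pst.
have hs i : (d 0 i) ^+ 2 = (d 0 (sg i)) ^+ 3.
  have := congr1 (fun q => nth 0 q i) hsg.
  rewrite /s /= (nth_map ord0) ?size_enum_ord // (nth_map ord0) ?size_enum_ord //.
  by rewrite nth_ord_enum tnth_mktuple.
have iter k i : (d 0 i) ^+ (2 ^ k) = (d 0 ((sg ^+ k)%g i)) ^+ (3 ^ k).
  elim: k i => [|k IH] i; first by rewrite expg0 perm1 !expn0.
  by rewrite expnSr exprM IH -exprM mulnC exprM hs expgSr permM -exprM mulnC expnSr.
pose N := #[sg]%g.
have Npos : (0 < N)%N := order_gt0 sg.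
have dnz i : d 0 i != 0.
  have := au; rewrite unitmxE unitfE aE !det_mulmx det_inv mulrAC mulVf; last first.
    by rewrite -unitfE -unitmxE.
  rewrite mul1r det_diag (bigD1 i) //= mulf_eq0 negb_or => /andP[] //.
pose M := (3 ^ N - 2 ^ N)%N.
have le23 : (2 ^ N <= 3 ^ N)%N by rewrite leq_exp2r.
have dM i : (d 0 i) ^+ M = 1.
  have := iter N i; rewrite expg_order perm1 -(subnKC le23) -/M exprD.
  move/(congr1 (fun x => x / d 0 i ^+ (2 ^ N))).
  by rewrite mulrAC divff ?expf_neq0 // mul1r => <-.
have oddM : odd M.
  by rewrite /M oddB // !oddX /= orbT orbF; case: (N) Npos.
have aM : a ^+ M = 1.
  rewrite powE; have -> : \row_i d 0 i ^+ M = const_mx 1.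
    by apply/rowP => i; rewrite !mxE dM.
  by rewrite diag_const_mx mulmx1 mulVmx.
pose k := M.+1./2.
have ak : a = (a ^+ 2) ^+ k.
  rewrite -exprM; have -> : (2 * k = M.+1)%N.
    by rewrite /k mul2n halfK /= oddM subn0.
  by rewrite exprSr aM mul1r.
have hc : invmx b *m a *m b = (a ^+ 3) ^+ k by rewrite {1}ak -conj_expr // -h3.
rewrite -(mulmxA a (invmx b)) -(mulmxA a) hc mulmxE -exprM -exprS exprSr.
by [].
Qed.
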